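(* Consider a qubit chain with sites indexed by $\mathbb{Z}$ and the Floquet unitary $U=\prod_{i\ \mathrm{odd}}C_{i,i+1}\prod_{i\ \mathrm{even}}C_{i,i+1}$, where each $C_{i,i+1}$ is a two-qubit Clifford gate on sites $(i,i+1)$ that is not in the product class. Let $k\ge1$, $a\in\mathbb{Z}$, and suppose $U$ has an irreducible left $k$-wall around $C=\{a+1,\dots,a+k\}$. Then the first gate $C_{a,a+1}$ and the last gate $C_{a+k,a+k+1}$ of the wall both belong to the $\mathrm{CZ}$-class.
   Context: Two-qubit Clifford gates fall into four classes under $C\mapsto(a_1\otimes a_2)C(a_3\otimes a_4)$ with $a_i$ single-qubit Cliffords (up to global phase): the product class (gates of the form $a\otimes b$), the $\mathrm{CZ}$-class $\{(a_1\otimes a_2)\,\mathrm{CZ}\,(a_3\otimes a_4)\}$ with $\mathrm{CZ}=\mathrm{diag}(1,1,1,-1)$, the $\mathrm{SWAP}$-class $\{(a_1\otimes a_2)\,\mathrm{SWAP}\,(a_3\otimes a_4)\}$, and the $\mathrm{FSWAP}$-class $\{(a_1\otimes a_2)\,\mathrm{CZ}\cdot\mathrm{SWAP}\,(a_3\otimes a_4)\}$. For integers $b\le c$, set $L_b=\{i\le b\}$, $C_{b,c}=\{b+1,\dots,c\}$ (empty if $b=c$), $R_c=\{i>c\}$. $U$ satisfies the left wall condition for $(b,c)$ if for every finitely supported Pauli string $P$ supported in $L_b$ and every integer $t\ge1$, $U^tPU^{-t}$ acts as the identity on every site of $R_c$. $U$ has an irreducible left $k$-wall around $\{a+1,\dots,a+k\}$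 if it satisfies the left wall condition for $(a,a+k)$ but not for any $(b,c)$ with $a\le b\le c\le a+k$ and $(b,c)\ne(a,a+k)$. *)

(* Defs.v *)
(* Clifford gates are represented, as is standard, by their
   symplectic action on Pauli operators (modulo phases) over F_2. *)
From HB Require Import structures.
From mathcomp Require Import all_boot all_order all_algebra.
Set Implicit Arguments. Unset Strict Implicit. Unset Printing Implicit Defensive.
Import Order.TTheory GRing.Theory Num.Theory.
Local Open Scope ring_scope.

(* A single-site Pauli operator modulo phase: row vector (x, z) over F_2,
   (0,0) = I, (1,0) = X, (0,1) = Z, (1,1) = Y. *)
Definition pauli1 := 'rV['F_2]_2.

(* Symplectic form on one qubit, and on two qubits (ordering (x1,z1,x2,z2)). *)
Definition J1 : 'M['F_2]_2 := \matrix_(i < 2, j < 2) (if i == j then 0 else 1).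
Definition J2 : 'M['F_2]_(2 + 2) := block_mx J1 0 0 J1.

(* Symplectic matrix of a single-qubit Clifford (modulo phase and Paulis).
   A Clifford acts on Pauli labels by  v |-> v *m M  (Heisenberg picture). *)
Definition clifford1 (M : 'M['F_2]_2) : Prop := M *m J1 *m M^T = J1.
Definition clifford2 (M : 'M['F_2]_(2 + 2)) : Prop := M *m J2 *m M^T = J2.

Definition tensor1 (a b : 'M['F_2]_2) : 'M['F_2]_(2 + 2) := block_mx a 0 0 b.

(* CZ : X1 -> X1 Z2, X2 -> Z1 X2, Z1 -> Z1, Z2 -> Z2. *)
Definition CZmx : 'M['F_2]_(2 + 2) :=
  \matrix_(i < 2 + 2, j < 2 + 2)
    (if i == j then 1
     else if ((i : nat) == 2%N) && ((j : nat) == 1%N) then 1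
     else if ((i : nat) == 0%N) && ((j : nat) == 3%N) then 1 else 0).
Definition SWAPmx : 'M['F_2]_(2 + 2) := block_mx 0 1%:M 1%:M 0.

(* Classes of two-qubit Cliffords under C |-> (a1 (x) a2) C (a3 (x) a4).
   (The symplectic representation is an anti-homomorphism; since all a_i
   range over all single-qubit Cliffords the order of the factors is
   immaterial.) *)
Definition in_class_of (G M : 'M['F_2]_(2 + 2)) : Prop :=
  exists a1 a2 a3 a4 : 'M['F_2]_2,
    [/\ clifford1 a1, clifford1 a2, clifford1 a3, clifford1 a4 &
        M = tensor1 a3 a4 *m G *m tensor1 a1 a2].

Definition product_class (M : 'M['F_2]_(2 + 2)) : Prop :=
  exists a b : 'M['F_2]_2, [/\ clifford1 a, clifford1 b & M = tensor1 a b].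
Definition CZ_class (M : 'M['F_2]_(2 + 2)) : Prop := in_class_of CZmx M.
Definition SWAP_class (M : 'M['F_2]_(2 + 2)) : Prop := in_class_of SWAPmx M.
Definition FSWAP_class (M : 'M['F_2]_(2 + 2)) : Prop :=
  in_class_of (SWAPmx *m CZmx) M.

Definition pstring := int -> pauli1.

Definition finsupp (P : pstring) : Prop :=
  exists m M : int, forall j, P j != 0 -> m <= j <= M.

(* Conjugation by one brickwork layer of gates C i on sites (i, i+1), for all
   i with i = e (mod 2).  The gate covering site j has left site [lsite e j]. *)
Definition lsite (e j : int) : int :=
  if ((j - e) %% 2)%Z == 0 then j else j - 1.

Definition layer (C : int -> 'M['F_2]_(2 + 2)) (e : int) (P : pstring) : pstring :=
  fun j =>
    let i := lsite e j in
    let w : 'rV['F_2]_(2 + 2) := row_mx (P i) (P (i + 1)) *m C i in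
    if i == j then lsubmx w else rsubmx w.

(* U = prod_{i odd} C_{i,i+1} prod_{i even} C_{i,i+1};
   conjU C P = U P U^{-1} (even layer conjugates first, then odd layer). *)
Definition conjU (C : int -> 'M['F_2]_(2 + 2)) (P : pstring) : pstring :=
  layer C 1 (layer C 0 P).

Definition left_wall (C : int -> 'M['F_2]_(2 + 2)) (b c : int) : Prop :=
  forall P : pstring, finsupp P -> (forall j, P j != 0 -> j <= b) ->
  forall t : nat, (1 <= t)%N ->
  forall j, c < j -> iter t (conjU C) P j = 0.

Definition irreducible_left_wall (C : int -> 'M['F_2]_(2 + 2)) (a : int) (k : nat) : Prop :=
  left_wall C a (a + k%:Z) /\
  (forall b c : int, a <= b -> b <= c -> c <= a + k%:Z ->
     (b, c) <> (a, a + k%:Z) -> ~ left_wall C b c).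

(* Main.v *)
Require Import Defs.
From Stdlib Require Import Classical.
From mathcomp Require Import all_boot all_order all_algebra zify.
Import Order.TTheory GRing.Theory Num.Theory.
Local Open Scope ring_scope.
Set Implicit Arguments. Unset Strict Implicit. Unset Printing Implicit Defensive.

Lemma F2cases (x : 'F_2) : x = 0 \/ x = 1.
Proof. case: x => [[|[|//]]] ? ; [left|right]; exact/val_inj. Qed.

Lemma F2_add_self (x : 'F_2) : x + x = 0.
Proof. by case: (F2cases x) => ->; apply/val_inj. Qed.

Lemma F2_opp (x : 'F_2) : - x = x.
Proof. by apply/eqP; rewrite eq_sym -subr_eq0 opprK F2_add_self. Qed.

Definition E2 : 'M['F_2]_2 := \matrix_(i < 2, j < 2) (if ((i : nat) == 0%N) && ((j : nat) == 1%N) then 1 else 0).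
Definition d2 (M : 'M['F_2]_2) : 'F_2 := M 0 0 * M 1 1 + M 0 1 * M 1 0.

Ltac ord2 i := let h := fresh in case: i => [[|[|//]] h].

Lemma J1T : J1^T = J1.
Proof. apply/matrixP => i j; rewrite !mxE; ord2 i; ord2 j; by []. Qed.

Lemma J1J1 : J1 *m J1 = 1%:M.
Proof. apply/matrixP => i j; rewrite !mxE !(big_ord_recr, big_ord0, add0r) !mxE; ord2 i; ord2 j; by apply/eqP. Qed.

Definition mk2 (a b c d : 'F_2) : 'M['F_2]_2 :=
  \matrix_(i < 2, j < 2) (if (i : nat) == 0%N then (if (j : nat) == 0%N then a else b)
                           else (if (j : nat) == 0%N then c else d)).

Lemma mk2E (M : 'M['F_2]_2) : M = mk2 (M 0 0) (M 0 1) (M 1 0) (M 1 1).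
Proof. apply/matrixP => i j; rewrite !mxE; ord2 i; ord2 j; by congr (M _ _); apply/val_inj. Qed.

Ltac F2c x := case: (F2cases x) => ->.

Lemma sym2 (M : 'M['F_2]_2) : M *m J1 *m M^T = d2 M *: J1.
Proof.
rewrite /d2 (mk2E M); move: (M 0 0) (M 0 1) (M 1 0) (M 1 1) => a b c d.
rewrite !mxE /=.
apply/matrixP => i j; rewrite !mxE !(big_ord_recr, big_ord0, add0r) !mxE !(big_ord_recr, big_ord0, add0r) !mxE.
F2c a; F2c b; F2c c; F2c d; ord2 i; ord2 j; by apply/eqP.
Qed.

Lemma d2T (M : 'M['F_2]_2) : d2 M^T = d2 M.
Proof. by rewrite /d2 !mxE [M 1 0 * _]mulrC. Qed.

Lemma cl1_d2 (M : 'M['F_2]_2) : clifford1 M <-> d2 M = 1.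
Proof.
rewrite /clifford1 sym2; split=> [h|->]; last by rewrite scale1r.
have := congr1 (fun X : 'M['F_2]_2 => X 0 1) h; rewrite !mxE /= mulr1.
by [].
Qed.

Lemma symp_rinv n (J M : 'M['F_2]_n) (JJ : J *m J = 1%:M) : M *m J *m M^T = J -> M *m (J *m M^T *m J) = 1%:M.
Proof. by move=> h; rewrite !mulmxA h JJ. Qed.

Lemma symp_linv n (J M : 'M['F_2]_n) (JJ : J *m J = 1%:M) : M *m J *m M^T = J -> (J *m M^T *m J) *m M = 1%:M.
Proof. by move=> h; apply: mulmx1C; apply: symp_rinv. Qed.

Lemma symp_T n (J M : 'M['F_2]_n) (JJ : J *m J = 1%:M) : M *m J *m M^T = J -> M^T *m J *m M = J.
Proof.
move=> h; have := symp_linv JJ h.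
move/(congr1 (mulmx J)); rewrite !mulmxA JJ mul1mx mulmx1 => h2.
by [].
Qed.

Lemma J2T : J2^T = J2.
Proof. by rewrite /J2 tr_block_mx !trmx0 J1T. Qed.

Lemma J2J2 : J2 *m J2 = 1%:M.
Proof.
by rewrite /J2 mulmx_block ?mulmx0 ?mul0mx ?addr0 ?add0r J1J1 -scalar_mx_block.
Qed.

Lemma cl2_block (A B Cc Dd : 'M['F_2]_2) : clifford2 (block_mx A B Cc Dd) ->
 [/\ A *m J1 *m A^T + B *m J1 *m B^T = J1,
     A *m J1 *m Cc^T + B *m J1 *m Dd^T = 0 &
     Cc *m J1 *m Cc^T + Dd *m J1 *m Dd^T = J1].
Proof.
rewrite /clifford2 /J2 tr_block_mx !mulmx_block ?mulmx0 ?mul0mx ?addr0 ?add0r.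
by case/eq_block_mx => h1 h2 _ h4.
Qed.

Ltac mxcomp := apply/matrixP; case=> [[|[|//]] ?]; case=> [[|[|//]] ?]; do 4 rewrite ?mxE ?(big_ord_recr) ?big_ord0 ?add0r; by apply/eqP.

Lemma nprod_B (C : 'M['F_2]_(2 + 2)) : clifford2 C -> ursubmx C = 0 -> product_class C.
Proof.
move=> hC hB; move: hC; rewrite -(submxK C) hB => /cl2_block [h1 h2 h4].
move: h1 h2; rewrite trmx0 ?mulmx0 ?mul0mx ?addr0 => h1 h2.
have hCc : dlsubmx C = 0.
  have := symp_linv J1J1 h1.
  move/(congr1 (fun X => X *m (J1 *m (dlsubmx C)^T))); rewrite -!mulmxA (mulmxA (ulsubmx C)) h2 !mulmx0 mul1mx.
  move/(congr1 (mulmx J1)); rewrite mulmx0 mulmxA J1J1 mul1mx => /eqP.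
  move=> /eqP h; by rewrite -[dlsubmx C]trmxK -h trmx0.
move: h4; rewrite hCc !mul0mx add0r => h4.
exists (ulsubmx C), (drsubmx C); split => //; try by rewrite /tensor1 -{1}(submxK C) hB hCc.
Qed.

Lemma mk2_0 : mk2 0 0 0 0 = 0.
Proof. mxcomp. Qed.

Lemma rank1_normal (B : 'M['F_2]_2) : B != 0 -> d2 B = 0 ->
  exists l r : 'M['F_2]_2, [/\ d2 l = 1, d2 r = 1 & l *m B *m r = E2].
Proof.
rewrite /d2 (mk2E B); move: (B 0 0) (B 0 1) (B 1 0) (B 1 1) => a b c d.
rewrite !mxE /=.
F2c a; F2c b; F2c c; F2c d => hB hd;
  try (by rewrite mk2_0 eqxx in hB);
  try (by exfalso; move: hd; apply/eqP);
  first [ exists (mk2 1 0 0 1), (mk2 1 0 0 1); split; [rewrite /d2 !mxE; by apply/eqP|rewrite /d2 !mxE; by apply/eqP|mxcomp]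
        | exists (mk2 1 0 0 1), (mk2 0 1 1 0); split; [rewrite /d2 !mxE; by apply/eqP|rewrite /d2 !mxE; by apply/eqP|mxcomp]
        | exists (mk2 1 0 0 1), (mk2 1 0 1 1); split; [rewrite /d2 !mxE; by apply/eqP|rewrite /d2 !mxE; by apply/eqP|mxcomp]
        | exists (mk2 0 1 1 0), (mk2 1 0 0 1); split; [rewrite /d2 !mxE; by apply/eqP|rewrite /d2 !mxE; by apply/eqP|mxcomp]
        | exists (mk2 0 1 1 0), (mk2 0 1 1 0); split; [rewrite /d2 !mxE; by apply/eqP|rewrite /d2 !mxE; by apply/eqP|mxcomp]
        | exists (mk2 0 1 1 0), (mk2 1 0 1 1); split; [rewrite /d2 !mxE; by apply/eqP|rewrite /d2 !mxE; by apply/eqP|mxcomp]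
        | exists (mk2 1 0 1 1), (mk2 1 0 0 1); split; [rewrite /d2 !mxE; by apply/eqP|rewrite /d2 !mxE; by apply/eqP|mxcomp]
        | exists (mk2 1 0 1 1), (mk2 0 1 1 0); split; [rewrite /d2 !mxE; by apply/eqP|rewrite /d2 !mxE; by apply/eqP|mxcomp]
        | exists (mk2 1 0 1 1), (mk2 1 0 1 1); split; [rewrite /d2 !mxE; by apply/eqP|rewrite /d2 !mxE; by apply/eqP|mxcomp] ].
Qed.


Lemma CZblock : CZmx = block_mx 1%:M E2 E2 1%:M.
Proof.
rewrite -[CZmx]submxK; congr block_mx;
apply/matrixP; case=> [[|[|//]] ?]; case=> [[|[|//]] ?]; rewrite !mxE /=; by apply/eqP.
Qed.

Lemma JEJ : J1 *m E2 *m J1 = E2^T.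
Proof. mxcomp. Qed.

Lemma opp_mx m n (M : 'M['F_2]_(m, n)) : - M = M.
Proof. by apply/matrixP => i j; rewrite !mxE F2_opp. Qed.

Lemma JJl m (X : 'M['F_2]_(m, 2)) : X *m J1 *m J1 = X.
Proof. by rewrite -mulmxA J1J1 mulmx1. Qed.

Lemma cl1_mul (X Y : 'M['F_2]_2) : clifford1 X -> clifford1 Y -> clifford1 (X *m Y).
Proof.
rewrite /clifford1 => hX hY; by rewrite trmx_mul !mulmxA -(mulmxA X) -(mulmxA X) hY.
Qed.

Lemma cl1_inv (X : 'M['F_2]_2) : clifford1 X -> clifford1 (J1 *m X^T *m J1).
Proof.
rewrite /clifford1 => hX; have hT := symp_T J1J1 hX.
rewrite !trmx_mul trmxK J1T !mulmxA JJl -(mulmxA J1 X^T) -(mulmxA J1) hT.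
by rewrite J1J1 mul1mx.
Qed.

Lemma FL (C : 'M['F_2]_(2 + 2)) : clifford2 C -> ursubmx C != 0 -> d2 (ursubmx C) = 0 ->
  CZ_class C.
Proof.
move=> hC hBn hBd.
set A := ulsubmx C; set B := ursubmx C; set Cc := dlsubmx C; set Dd := drsubmx C.
have hCb : C = block_mx A B Cc Dd by rewrite submxK.
have [h1 h2 _] : _ := cl2_block (eq_rect _ clifford2 hC _ hCb).
have hCT : clifford2 C^T by rewrite /clifford2 trmxK; exact: (@symp_T _ J2 C J2J2 hC).
have [_ _ h4'] : _ := cl2_block (eq_rect _ clifford2 hCT _ (etrans (congr1 trmx hCb) (tr_block_mx _ _ _ _))).
have hBB : B *m J1 *m B^T = 0 by rewrite sym2 hBd scale0r.
have hBB' : B^T *m J1 *m B^T^T = 0 by rewrite sym2 d2T hBd scale0r.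
move: h1 h4'; rewrite hBB hBB' addr0 add0r => hA hDT.
have hD : clifford1 Dd by apply/cl1_d2; rewrite -d2T; apply/cl1_d2.
have [l [r [hl hr hlr]]] := rank1_normal hBn hBd.
have cl : clifford1 l by apply/cl1_d2.
have cr : clifford1 r by apply/cl1_d2.
set li := J1 *m l^T *m J1; set ri := J1 *m r^T *m J1.
have hli : li *m l = 1%:M := symp_linv J1J1 cl.
have hrr : r *m ri = 1%:M := symp_rinv J1J1 cr.
have hBeq : B = li *m E2 *m ri.
  by rewrite -hlr (mulmxA li (l *m B)) (mulmxA li l) hli mul1mx -(mulmxA B r ri) hrr mulmx1.
have h2' : A *m J1 *m Cc^T = B *m J1 *m Dd^T.
  by move/eqP: h2; rewrite addr_eq0 opp_mx => /eqP.
have key : Cc^T = A^T *m J1 *m B *m J1 *m Dd^T.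
  have e : (J1 *m A^T *m J1) *m (A *m J1 *m Cc^T) = J1 *m Cc^T.
    by rewrite !mulmxA (symp_linv J1J1 hA) mul1mx.
  rewrite h2' in e.
  by rewrite -[Cc^T]mul1mx -J1J1 -mulmxA -e !mulmxA J1J1 mul1mx.
exists (l *m A), ri, li, (Dd *m r); split.
- exact: cl1_mul.
- exact: cl1_inv.
- exact: cl1_inv.
- exact: cl1_mul.
rewrite {1}hCb /tensor1 CZblock !mulmx_block ?mulmx0 ?mul0mx ?addr0 ?add0r ?mulmx1.
congr block_mx.
- by rewrite mulmxA hli mul1mx.
- by [].
- apply: trmx_inj; rewrite key hBeq !trmx_mul -JEJ /li /ri !mulmxA !JJl.
  by [].
- by rewrite -mulmxA hrr mulmx1.
Qed.

Lemma kerd2 (p : 'rV['F_2]_2) (M : 'M['F_2]_2) : p != 0 -> p *m M = 0 -> d2 M = 0.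
Proof.
move=> hp hpM; case: (F2cases (d2 M)) => // /cl1_d2 hM.
have := symp_rinv J1J1 hM => hinv.
move: hp; rewrite -[p]mulmx1 -hinv mulmxA hpM mul0mx; by rewrite eqxx.
Qed.

Lemma cz_or_nonzero_right (G : 'M['F_2]_(2 + 2)) : clifford2 G -> ~ product_class G ->
  ~ CZ_class G -> forall p : pauli1, p != 0 -> rsubmx (row_mx p 0 *m G) != 0.
Proof.
move=> hG hnp hnc p hp; apply/negP => /eqP hr; apply: hnc.
have hBn : ursubmx G != 0 by apply/negP => /eqP hB; apply: hnp; exact: nprod_B.
apply: FL => //; apply: (kerd2 hp).
by move: hr; rewrite -{1}(submxK G) mul_row_block !mul0mx !addr0 row_mxKr.
Qed.

Lemma cz_or_nonzero_left (G : 'M['F_2]_(2 + 2)) : clifford2 G -> ~ product_class G ->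
  ~ CZ_class G -> forall q : pauli1, q != 0 -> lsubmx (row_mx 0 q *m (J2 *m G^T *m J2)) != 0.
Proof.
move=> hG hnp hnc q hq; apply/negP => /eqP hr; apply: hnc.
have hBn : ursubmx G != 0 by apply/negP => /eqP hB; apply: hnp; exact: nprod_B.
apply: FL => //; rewrite -d2T.
have hq' : q *m J1 != 0.
  by apply: contraNneq hq => h; rewrite -[q]JJl h mul0mx.
apply: (kerd2 hq').
move: hr; rewrite -{1}(submxK G) tr_block_mx /J2 !mulmxA mul_row_block !mul0mx !add0r ?mulmx0 ?addr0.
rewrite mul_row_block !mul0mx !add0r mul_row_block ?mulmx0 ?addr0 ?add0r row_mxKl.
by move/(congr1 (mulmx^~ J1)); rewrite JJl mul0mx.
Qed.


Definition sp1 (u v : pauli1) : 'F_2 := (u *m J1 *m v^T) 0 0.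
Definition sp2 (u v : 'rV['F_2]_(2 + 2)) : 'F_2 := (u *m J2 *m v^T) 0 0.
Definition Dg (C : int -> 'M['F_2]_(2 + 2)) : int -> 'M['F_2]_(2 + 2) :=
  fun i => J2 *m (C i)^T *m J2.
Definition Ustar (C : int -> 'M['F_2]_(2 + 2)) (P : pstring) : pstring :=
  layer (Dg C) 0 (layer (Dg C) 1 P).
Definition pw (m : int) (n : nat) (x y : pstring) : 'F_2 :=
  \sum_(i < n) sp1 (x (m + i%:Z)) (y (m + i%:Z)).
Definition aligned (e m : int) : Prop := ((m - e) %% 2)%Z = 0.
Definition sup (x : pstring) (lo hi : int) : Prop := forall j, (j < lo \/ hi < j) -> x j = 0.

Lemma sp10 v : sp1 0 v = 0. Proof. by rewrite /sp1 !mul0mx mxE. Qed.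
Lemma sp1_0 v : sp1 v 0 = 0. Proof. by rewrite /sp1 trmx0 mulmx0 mxE. Qed.
Lemma sp1C u v : sp1 u v = sp1 v u.
Proof.
rewrite /sp1 -[in LHS](trmxK (u *m J1 *m v^T)) mxE !trmx_mul trmxK J1T.
by rewrite mulmxA.
Qed.

Lemma sp1_nondeg w : (forall r, sp1 r w = 0) -> w = 0.
Proof.
move=> h.
have h1 : J1 *m w^T = 0.
  apply/matrixP => i j; rewrite (ord1 j) [RHS]mxE.
  have := h (delta_mx 0 i); rewrite /sp1 -mulmxA -rowE mxE => ->.
  by [].
by rewrite -[w]trmxK -[w^T]mul1mx -J1J1 -mulmxA h1 mulmx0 trmx0.
Qed.

Lemma sp2_row u1 u2 v1 v2 :
  sp2 (row_mx u1 u2) (row_mx v1 v2) = sp1 u1 v1 + sp1 u2 v2.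
Proof.
rewrite /sp2 /sp1 /J2 mul_row_block ?mulmx0 ?mul0mx ?addr0 ?add0r tr_row_mx mul_row_col.
by rewrite mxE.
Qed.

Lemma sp2_adj w z (G : 'M['F_2]_(2 + 2)) : sp2 (w *m G) z = sp2 w (z *m (J2 *m G^T *m J2)).
Proof.
rewrite /sp2 !trmx_mul !trmxK J2T !mulmxA -(mulmxA w J2 J2) J2J2 mulmx1.
by [].
Qed.

Lemma lsite_al e m : aligned e m -> lsite e m = m.
Proof. by rewrite /aligned /lsite => ->. Qed.

Lemma lsite_al1 e m : aligned e m -> lsite e (m + 1) = m.
Proof.
rewrite /aligned /lsite => h.
have -> : ((m + 1 - e) %% 2)%Z == 0 = false by apply/eqP; lia.
by rewrite addrK.
Qed.

Lemma aligned2 e m : aligned e m -> aligned e (m + 2).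
Proof. rewrite /aligned; lia. Qed.

Lemma lsite_cases e j : lsite e j = j \/ lsite e j = j - 1.
Proof. rewrite /lsite; case: ifP; by [left|right]. Qed.

Lemma layer_block (G : int -> 'M['F_2]_(2 + 2)) e x m : aligned e m ->
  row_mx (layer G e x m) (layer G e x (m + 1)) = row_mx (x m) (x (m + 1)) *m G m.
Proof.
move=> h; rewrite /layer /= lsite_al // lsite_al1 // eqxx.
have -> : (m == m + 1) = false by apply/eqP; lia.
by rewrite hsubmxK.
Qed.

Lemma layer_l (G : int -> 'M['F_2]_(2 + 2)) e x m : aligned e m ->
  layer G e x m = lsubmx (row_mx (x m) (x (m + 1)) *m G m).
Proof. by move=> h; rewrite -(layer_block G x h) row_mxKl. Qed.

Lemma layer_r (G : int -> 'M['F_2]_(2 + 2)) e x m : aligned e m ->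
  layer G e x (m + 1) = rsubmx (row_mx (x m) (x (m + 1)) *m G m).
Proof. by move=> h; rewrite -(layer_block G x h) row_mxKr. Qed.

Lemma layer_sup (G : int -> 'M['F_2]_(2 + 2)) e x lo hi : sup x lo hi ->
  sup (layer G e x) (lo - 1) (hi + 1).
Proof.
move=> h j hj; rewrite /layer /=.
have [hx1 hx2] : x (lsite e j) = 0 /\ x (lsite e j + 1) = 0.
  by split; apply: h; case: (lsite_cases e j) => ->; lia.
rewrite hx1 hx2 row_mx0 mul0mx; case: ifP => _.
  by rewrite -(@row_mx0 _ 1 2 2) row_mxKl.
by rewrite -(@row_mx0 _ 1 2 2) row_mxKr.
Qed.

Lemma U_sup C x lo hi : sup x lo hi -> sup (conjU C x) (lo - 2) (hi + 2).
Proof.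
move=> h; have := layer_sup C 1 (layer_sup C 0 h).
by move=> h2 j hj; apply: h2; lia.
Qed.

Lemma iterU_sup C x lo hi t : sup x lo hi ->
  sup (iter t (conjU C) x) (lo - 2 * t%:Z) (hi + 2 * t%:Z).
Proof.
move=> h; elim: t => [|t IH] /=.
  by move=> j hj; apply: h; lia.
by move=> j hj; apply: (U_sup C IH); lia.
Qed.

Lemma pw_recl m n x y : pw m n.+1 x y = sp1 (x m) (y m) + pw (m + 1) n x y.
Proof.
rewrite /pw big_ord_recl /= addr0; congr (_ + _); apply: eq_bigr => i _.
by rewrite (_ : m + (bump 0 i)%:Z = m + 1 + i%:Z) // /bump /=; lia.
Qed.

Lemma pw_recr m n x y : pw m n.+1 x y = pw m n x y + sp1 (x (m + n%:Z)) (y (m + n%:Z)).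
Proof. by rewrite /pw big_ord_recr. Qed.

Lemma pw_extl m n x y : x (m - 1) = 0 -> pw (m - 1) n.+1 x y = pw m n x y.
Proof. by move=> h; rewrite pw_recl h sp10 add0r subrK. Qed.

Lemma pw_extr m n x y : x (m + n%:Z) = 0 -> pw m n.+1 x y = pw m n x y.
Proof. by move=> h; rewrite pw_recr h sp10 addr0. Qed.

Lemma pw_layer (G : int -> 'M['F_2]_(2 + 2)) e m N x y : aligned e m ->
  pw m (2 * N) (layer G e x) y = pw m (2 * N) x (layer (fun i => J2 *m (G i)^T *m J2) e y).
Proof.
elim: N m => [|N IH] m hm; first by rewrite /pw !big_ord0.
rewrite (_ : (2 * N.+1 = (2 * N).+2)%N); last by lia.
rewrite !pw_recl !addrA (_ : m + 1 + 1 = m + 2); last by lia.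
rewrite IH; last exact: aligned2.
congr (_ + _).
rewrite -!sp2_row (layer_block G x hm) sp2_adj.
by rewrite (layer_block (fun i => J2 *m (G i)^T *m J2) y hm).
Qed.

Lemma pw_ext2 m n x y : x (m - 1) = 0 -> x (m + n%:Z) = 0 ->
  pw (m - 1) n.+2 x y = pw m n x y.
Proof.
move=> h1 h2; rewrite pw_extr ?pw_extl //.
by rewrite (_ : m - 1 + (n.+1)%:Z = m + n%:Z) //; lia.
Qed.

Lemma pw_U C m N x y lo hi : aligned 1 m -> sup x lo hi -> m < lo ->
  hi + 1 < m + (2 * N)%:Z ->
  pw m (2 * N) (conjU C x) y = pw (m - 2) (2 * N.+2) x (Ustar C y).
Proof.
move=> hm hs hlo hhi.
have hx0 := layer_sup C 0 hs.
rewrite /conjU /Ustar /Dg (@pw_layer C 1 m N (layer C 0 x) y hm).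
rewrite -pw_ext2; first last.
- by apply: hx0; lia.
- by apply: hx0; lia.
rewrite (_ : ((2 * N).+2 = 2 * N.+1)%N); last by lia.
rewrite (@pw_layer C 0 (m - 1) N.+1 x _ (_ : aligned 0 (m - 1))); last by move: hm; rewrite /aligned; lia.
rewrite -pw_ext2; first last.
- by apply: hs; lia.
- by apply: hs; lia.
rewrite (_ : ((2 * N.+1).+2 = 2 * N.+2)%N); last by lia.
by rewrite (_ : m - 1 - 1 = m - 2) //; lia.
Qed.

Lemma pw_iter C x lo hi t : sup x lo hi -> forall m N y, aligned 1 m ->
  m + 2 * t%:Z < lo -> hi + 2 * t%:Z + 1 < m + (2 * N)%:Z ->
  pw m (2 * N) (iter t (conjU C) x) y =
  pw (m - 2 * t%:Z) (2 * (N + 2 * t)) x (iter t (Ustar C) y).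
Proof.
move=> hs; elim: t => [|t IH] m N y hm h1 h2.
  by rewrite /= mulr0 subr0 muln0 addn0.
have h3 : m < lo - 2 * t%:Z by lia.
have h4 : hi + 2 * t%:Z + 1 < m + (2 * N)%:Z by lia.
have hm2 : aligned 1 (m - 2) by move: hm; rewrite /aligned; lia.
have h5 : m - 2 + 2 * t%:Z < lo by lia.
have h6 : hi + 2 * t%:Z + 1 < m - 2 + (2 * N.+2)%:Z by lia.
rewrite iterS (@pw_U C m N (iter t (conjU C) x) y (lo - 2 * t%:Z) (hi + 2 * t%:Z) hm (iterU_sup C (t := t) hs) h3 h4).
rewrite (IH (m - 2) N.+2 (Ustar C y) hm2 h5 h6) -iterSr.
have -> : m - 2 - 2 * t%:Z = m - 2 * t.+1%:Z by lia.
by have -> : (2 * (N.+2 + 2 * t) = 2 * (N + 2 * t.+1))%N by lia.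
Qed.

Definition delta (j : int) (s : pauli1) : pstring := fun j' => if j' == j then s else 0.

Lemma pw_eval m n x y j : m <= j -> j < m + n%:Z ->
  (forall j', j' != j -> sp1 (x j') (y j') = 0) -> pw m n x y = sp1 (x j) (y j).
Proof.
move=> h1 h2 h.
have hlt : (`|j - m| < n)%N by lia.
rewrite /pw (bigD1 (Ordinal hlt)) //= big1 ?addr0.
  by rewrite (_ : m + `|j - m|%:Z = j) //; lia.
move=> i hi; apply: h; apply/eqP => e.
move: hi; rewrite -val_eqE /= => /eqP; apply; lia.
Qed.

Lemma pw_zero m n x y : (forall j, sp1 (x j) (y j) = 0) -> pw m n x y = 0.
Proof. by move=> h; rewrite /pw big1. Qed.


Lemma cl2_inj (G : 'M['F_2]_(2 + 2)) (w : 'rV['F_2]_(2 + 2)) : clifford2 G -> w *m G = 0 -> w = 0.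
Proof.
move=> hG h; have := symp_rinv J2J2 hG => hinv.
by rewrite -[w]mulmx1 -hinv mulmxA h mul0mx.
Qed.

Lemma cl2_injD (G : 'M['F_2]_(2 + 2)) (w : 'rV['F_2]_(2 + 2)) : clifford2 G ->
  w *m (J2 *m G^T *m J2) = 0 -> w = 0.
Proof.
move=> hG h; have := symp_linv J2J2 hG => hinv.
by rewrite -[w]mulmx1 -hinv mulmxA h mul0mx.
Qed.

Lemma rowmx_eq0 (u v : pauli1) : row_mx u v = 0 -> u = 0 /\ v = 0.
Proof. by move/eqP; rewrite row_mx_eq0 => /andP [/eqP -> /eqP ->]. Qed.

Lemma lsub0 : lsubmx (0 : 'rV['F_2]_(2 + 2)) = 0.
Proof. by rewrite -(@row_mx0 _ 1 2 2) row_mxKl. Qed.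
Lemma rsub0 : rsubmx (0 : 'rV['F_2]_(2 + 2)) = 0.
Proof. by rewrite -(@row_mx0 _ 1 2 2) row_mxKr. Qed.

Lemma parity (m : int) : aligned 0 m \/ aligned 1 m.
Proof. rewrite /aligned; lia. Qed.

Lemma right_edge C b c : (forall i, clifford2 (C i)) -> b <= c - 1 -> left_wall C b c ->
  (forall p : pauli1, p != 0 -> rsubmx (row_mx p 0 *m C c) != 0) -> left_wall C b (c - 1).
Proof.
move=> hcl hbc hw hG P hfin hP t ht j hj.
set Z := fun t => iter t (conjU C) P.
have F1 : forall t j, c < j -> Z t j = 0.
  case=> [|t'] j' hj'.
    rewrite /Z /=; apply/eqP; apply: contraT => hne; have := hP _ hne; lia.
  by apply: (hw P hfin hP t'.+1).
have [hjc|hjc] : c < j \/ j = c by lia.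
  exact: F1.
subst j.
have key : forall t, Z t.+1 c = 0.
  move=> t0.
  case: (parity c) => hpar.
  - have hQ : forall u, layer C 0 (Z u) (c + 1) = 0.
      move=> u.
      have hb := layer_block C (layer C 0 (Z u)) (_ : aligned 1 (c + 1)).
      have e0 : row_mx (layer C 1 (layer C 0 (Z u)) (c + 1)) (layer C 1 (layer C 0 (Z u)) (c + 1 + 1)) = 0.
        have -> : layer C 1 (layer C 0 (Z u)) = Z u.+1 by [].
        by rewrite !F1 ?row_mx0 //; lia.
      rewrite hb in e0; last by move: hpar; rewrite /aligned; lia.
      by case: (rowmx_eq0 (cl2_inj (hcl _) e0)).
    have hZ : forall u, Z u c = 0.
      move=> u; have := hQ u; rewrite layer_r // (F1 u (c + 1)); last by lia.
      move=> h; apply/eqP; apply: contraT => hne; have := hG _ hne; by rewrite h eqxx.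
    exact: hZ.
  - have hQ1 : layer C 0 (Z t0) (c + 1) = 0.
      rewrite layer_l; last by move: hpar; rewrite /aligned; lia.
      by rewrite !F1 ?row_mx0 ?mul0mx ?lsub0 //; lia.
    have hZ1 : Z t0.+1 (c + 1) = 0 by apply: F1; lia.
    have hZ1' : Z t0.+1 (c + 1) = rsubmx (row_mx (layer C 0 (Z t0) c) 0 *m C c).
      have -> : Z t0.+1 = layer C 1 (layer C 0 (Z t0)) by [].
      by rewrite (layer_r C (layer C 0 (Z t0)) hpar) hQ1.
    have hQc : layer C 0 (Z t0) c = 0.
      apply/eqP; apply: contraT => hne; have := hG _ hne; by rewrite -hZ1' hZ1 eqxx.
    have -> : Z t0.+1 c = lsubmx (row_mx (layer C 0 (Z t0) c) (layer C 0 (Z t0) (c + 1)) *m C c).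
      have -> : Z t0.+1 = layer C 1 (layer C 0 (Z t0)) by [].
      by rewrite (layer_l C (layer C 0 (Z t0)) hpar).
    by rewrite hQc hQ1 row_mx0 mul0mx lsub0.
case: t ht => [//|t] _; exact: key.
Qed.

Lemma left_edge C b y : (forall i, clifford2 (C i)) ->
  (forall t i, i <= b -> iter t (Ustar C) y i = 0) -> y (b + 1) = 0 ->
  (forall q : pauli1, q != 0 -> lsubmx (row_mx 0 q *m Dg C b) != 0) ->
  forall t, iter t (Ustar C) y (b + 1) = 0.
Proof.
move=> hcl hd hy hG.
set Z := fun t => iter t (Ustar C) y.
have hd' : forall t i, i <= b -> Z t i = 0 := hd.
have ZS : forall u, Z u.+1 = layer (Dg C) 0 (layer (Dg C) 1 (Z u)) by [].
suff hs : forall t, Z t (b + 1) = 0 by exact: hs.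
case: (parity b) => hpar.
- case=> [//|u].
  have hW : layer (Dg C) 1 (Z u) (b - 1 + 1) = 0.
    rewrite (layer_r (Dg C) (Z u) (_ : aligned 1 (b - 1))); last by move: hpar; rewrite /aligned; lia.
    by rewrite !hd' ?row_mx0 ?mul0mx ?rsub0 //; lia.
  rewrite (_ : b - 1 + 1 = b) in hW; last by lia.
  have e1 : Z u.+1 b = lsubmx (row_mx (layer (Dg C) 1 (Z u) b) (layer (Dg C) 1 (Z u) (b + 1)) *m Dg C b).
    by rewrite ZS (layer_l (Dg C) (layer (Dg C) 1 (Z u)) hpar).
  have hW1 : layer (Dg C) 1 (Z u) (b + 1) = 0.
    move: e1; rewrite hW hd' // => h.
    apply/eqP; apply: contraT => hne; have := hG _ hne; by rewrite -h eqxx.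
  have -> : Z u.+1 (b + 1) = rsubmx (row_mx (layer (Dg C) 1 (Z u) b) (layer (Dg C) 1 (Z u) (b + 1)) *m Dg C b).
    by rewrite ZS (layer_r (Dg C) (layer (Dg C) 1 (Z u) ) hpar).
  by rewrite hW hW1 row_mx0 mul0mx rsub0.
- move=> u.
  have hal : aligned 0 (b - 1) by move: hpar; rewrite /aligned; lia.
  have e0 : row_mx (Z u.+1 (b - 1)) (Z u.+1 (b - 1 + 1)) = 0.
    by rewrite !hd' ?row_mx0 //; lia.
  rewrite ZS (layer_block (Dg C) (layer (Dg C) 1 (Z u)) hal) in e0.
  have [_ hWb] := rowmx_eq0 (cl2_injD (hcl _) e0).
  rewrite (_ : b - 1 + 1 = b) in hWb; last by lia.
  move: hWb; rewrite (layer_l (Dg C) (Z u) hpar) hd' //.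
  move=> h; apply/eqP; apply: contraT => hne; have := hG _ hne; by rewrite h eqxx.
Qed.


Lemma window (L H : int) (t : nat) :
  exists m N, [/\ aligned 1 m, m + 2 * t%:Z < L & H < m + (2 * N)%:Z].
Proof.
exists ((2 * (- Posz (absz L) - t%:Z - 1) + 1)%R : int).
exists (absz H + absz ((2 * (- Posz (absz L) - t%:Z - 1) + 1)%R : int) + 1)%N.
split; rewrite ?/aligned; lia.
Qed.

Lemma delta_sup i r : sup (delta i r) i i.
Proof. move=> j hj; rewrite /delta; case: eqP => // e; lia. Qed.

Lemma dual_wall C b c j s : left_wall C b c -> c < j -> b <= c ->
  forall tau i, i <= b -> iter tau (Ustar C) (delta j s) i = 0.
Proof.
move=> hw hj hbc tau i hi; apply: sp1_nondeg => r.
have [m [N [hal h1 h2]]] := window (Num.min i j) (Num.max (i + 2 * tau%:Z + 1) j) tau.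
have E := pw_iter C (t := tau) (@delta_sup i r) (m := m) (N := N) (delta j s) hal
   (_ : m + 2 * tau%:Z < i) (_ : i + 2 * tau%:Z + 1 < m + (2 * N)%:Z).
rewrite (@pw_eval m (2 * N) _ _ j) in E; first last.
- by move=> j' hj'; rewrite /delta (negbTE hj') sp1_0.
- lia.
- lia.
rewrite (@pw_eval _ _ _ _ i) in E; first last.
- by move=> j' hj'; rewrite {1}/delta (negbTE hj') sp10.
- lia.
- lia.
have hdi : delta i r i = r by rewrite /delta eqxx.
rewrite hdi in E; rewrite -E.
case: tau E {h1 h2} => [|tau] E.
  by rewrite /= /delta (_ : (j == i) = false) ?sp10 //; apply/eqP; lia.
rewrite (hw (delta i r)) ?sp10 //.
- exists i, i => j'; rewrite /delta; case: (j' =P i) => [-> _|]; [lia | by rewrite eqxx].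
- move=> j'; rewrite /delta; case: (j' =P i) => [-> _|]; [lia | by rewrite eqxx].
all: lia.
Qed.

Unset Implicit Arguments.

Theorem lemma7 (C : int -> 'M['F_2]_(2 + 2))
  (hcliff : forall i : int, clifford2 (C i))
  (hnprod : forall i : int, ~ product_class (C i))
  (k : nat) (hk : (1 <= k)%N) (a : int)
  (hwall : irreducible_left_wall C a k) :
  CZ_class (C a) /\ CZ_class (C (a + k%:Z)).
Proof.
have [hw hirr] := hwall.
split.
- case: (classic (CZ_class (C a))) => // hnc; exfalso.
  have hG := cz_or_nonzero_left (hcliff a) (hnprod a) hnc.
  apply: (hirr (a + 1) (a + k%:Z)); [lia | lia | lia | by case; lia |].
  move=> P [lo [hi hb]] hP t ht j hj.
  apply: sp1_nondeg => s; rewrite sp1C.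
  have hsup : sup P lo hi.
    move=> j' hj'; apply/eqP; apply: contraT => hne; have := hb _ hne; lia.
  have DW2 : forall tau i, i <= a + 1 -> iter tau (Ustar C) (delta j s) i = 0.
    move=> tau i hi'.
    have [hle|heq] : i <= a \/ i = a + 1 by lia.
      by apply: (@dual_wall C a (a + k%:Z) j s hw); lia.
    subst i; apply: (left_edge hcliff) => //.
    + by move=> t' i' hi''; apply: (@dual_wall C a (a + k%:Z) j s hw); lia.
    + by rewrite /delta (_ : (a + 1 == j) = false) //; apply/eqP; lia.
  have [m [N [hal h1 h2]]] := window (Num.min lo (j - 2 * t%:Z)) (Num.max (hi + 2 * t%:Z + 1) j) t.
  have hdj : delta j s j = s by rewrite /delta eqxx.
  rewrite -{1}hdj -(@pw_eval m (2 * N) _ (delta j s) j); first last.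
  + by move=> j' hj'; rewrite /delta (negbTE hj') sp1_0.
  + lia.
  + lia.
  rewrite (pw_iter C (t := t) hsup (m := m) (N := N) (delta j s) hal); [| lia | lia].
  apply: pw_zero => i.
  have [hle|hgt] : i <= a + 1 \/ a + 1 < i by lia.
    by rewrite DW2 // sp1_0.
  have -> : P i = 0 by apply/eqP; apply: contraT => hne; have := hP _ hne; lia.
  by rewrite sp10.
- case: (classic (CZ_class (C (a + k%:Z)))) => // hnc; exfalso.
  have hG := cz_or_nonzero_right (hcliff _) (hnprod _) hnc.
  apply: (hirr a (a + k%:Z - 1)); [lia | lia | lia | by case; lia |].
  apply: (right_edge hcliff) => //; lia.
Qed.
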